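(* Let $K$ be an $\mathcal R$-dioid (i.e., a $*$-continuous Kleene algebra). For each $\phi\in K\otimes_{\mathcal R}C_2'$ there are $n\in\mathbb N$, $S\in\{0,1\}^{1\times n}$, $F\in\{0,1\}^{n\times 1}$, $U\in\{0,b,p\}^{n\times n}$, $V\in\{0,d,q\}^{n\times n}$ and $X\in K^{n\times n}$ such that \[ \phi=S(U+X+V)^*F \] (computed in the matrix Kleene algebra over $K\otimes_{\mathcal R}C_2'$).
   Context: An $\mathcal R$-dioid is a dioid in which every regular subset of its multiplicative monoid has a supremum $\sum A$ with $\sum(AB)=(\sum A)(\sum B)$; equivalently a $*$-continuous Kleene algebra. An $\mathcal R$-congruence is a semiring congruence such that regular sets with equal downward closures modulo it have congruent suprema. $C_2'=\mathcal R\Delta_2^*/\rho$ where $\Delta_2=\{b,p,d,q\}$, $\mathcal R\Delta_2^*$ is the algebra of regular languages over $\Delta_2$, and $\rho$ is the least $\mathcal R$-congruence containing $bd=pq=1$, $bq=pd=0$. $K\otimes_{\mathcal R}C_2'$ is the tensor product of $\mathcal R$-dioids (universal $\mathcal R$-dioid with $\mathcal R$-morphisms from $K$ and $C_2'$ whose images commute elementwise); elements of $K$ and $C_2'$ are identified with their images. Matrices over a Kleene algebra form a Kleene algebra with matrix sum, product and the standard (block-recursive) matrix star. *)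

(* Defs.v *)
From Stdlib Require Import List.
Import ListNotations.
Set Implicit Arguments.

Inductive rexp (A : Type) : Type :=
| RZero | ROne | RAtom (a : A)
| RPlus (e f : rexp A) | RMul (e f : rexp A) | RStar (e : rexp A).
Arguments RZero {A}. Arguments ROne {A}.

(** Semantics of e as a subset of the monoid (A, mul, one):
    the regular subsets are exactly the sets [rsem mul one e]. *)
Fixpoint rsem {A : Type} (mul : A -> A -> A) (one : A) (e : rexp A) : A -> Prop :=
  match e with
  | RZero => fun _ => False
  | ROne => fun x => x = one
  | RAtom a => fun x => x = a
  | RPlus e f => fun x => rsem mul one e x \/ rsem mul one f x
  | RMul e f => fun x => exists y z, rsem mul one e y /\ rsem mul one f z /\ x = mul y z
  | RStar e => fun x => exists s : list A,
                  Forall (rsem mul one e) s /\ x = fold_right mul one s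
  end.

(** Image of a regular expression under a map (image of the regular set
    under a monoid morphism). *)
Fixpoint rmap {A B : Type} (f : A -> B) (e : rexp A) : rexp B :=
  match e with
  | RZero => RZero | ROne => ROne | RAtom a => RAtom (f a)
  | RPlus e1 e2 => RPlus (rmap f e1) (rmap f e2)
  | RMul e1 e2 => RMul (rmap f e1) (rmap f e2)
  | RStar e1 => RStar (rmap f e1)
  end.

Record rdioid := RDioid {
  dcar :> Type;
  dadd : dcar -> dcar -> dcar;
  dmul : dcar -> dcar -> dcar;
  dzero : dcar;
  done : dcar;
  dsup : rexp dcar -> dcar;
  daddA : forall x y z, dadd x (dadd y z) = dadd (dadd x y) z;
  daddC : forall x y, dadd x y = dadd y x;
  dadd0 : forall x, dadd dzero x = x;
  daddI : forall x, dadd x x = x;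
  dmulA : forall x y z, dmul x (dmul y z) = dmul (dmul x y) z;
  dmul1l : forall x, dmul done x = x;
  dmul1r : forall x, dmul x done = x;
  dmulDl : forall x y z, dmul (dadd x y) z = dadd (dmul x z) (dmul y z);
  dmulDr : forall x y z, dmul x (dadd y z) = dadd (dmul x y) (dmul x z);
  dmul0l : forall x, dmul dzero x = dzero;
  dmul0r : forall x, dmul x dzero = dzero;
  dsup_ub : forall e x, rsem dmul done e x -> dadd x (dsup e) = dsup e;
  dsup_least : forall e y, (forall x, rsem dmul done e x -> dadd x y = y) ->
                           dadd (dsup e) y = y;
  dsup_mul : forall e f, dsup (RMul e f) = dmul (dsup e) (dsup f)
}.
Arguments dadd {r}. Arguments dmul {r}. Arguments dzero {r}. Arguments done {r}.
Arguments dsup {r}.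

Definition kstar {K : rdioid} (x : K) : K := dsup (RStar (RAtom x)).

Definition rmorph {K T : rdioid} (f : K -> T) : Prop :=
  f dzero = dzero /\ f done = done /\
  (forall x y, f (dadd x y) = dadd (f x) (f y)) /\
  (forall x y, f (dmul x y) = dmul (f x) (f y)) /\
  (forall e, f (dsup e) = dsup (rmap f e)).

Inductive delta := b | p | d | q.

Definition lang := list delta -> Prop.
Definition regular (L : lang) : Prop :=
  exists e : rexp (list delta), forall w, L w <-> rsem (@app delta) nil e w.
Definition RegLang := { L : lang | regular L }.

Definition lzero : lang := fun _ => False.
Definition lone : lang := fun w => w = nil.
Definition ladd (L L' : lang) : lang := fun w => L w \/ L' w.
Definition lmul (L L' : lang) : lang :=
  fun w => exists u v, L u /\ L' v /\ w = u ++ v.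
Definition lsing (a : delta) : lang := fun w => w = [a].

Lemma regular_zero : regular lzero.
Proof. exists RZero; intro w; simpl; tauto. Qed.
Lemma regular_one : regular lone.
Proof. exists ROne; intro w; simpl; tauto. Qed.
Lemma regular_sing a : regular (lsing a).
Proof. exists (RAtom [a]); intro w; simpl; unfold lsing; tauto. Qed.
Lemma regular_add L L' : regular L -> regular L' -> regular (ladd L L').
Proof.
  intros [e He] [f Hf]; exists (RPlus e f); intro w; simpl; unfold ladd.
  rewrite He, Hf; tauto.
Qed.
Lemma regular_mul L L' : regular L -> regular L' -> regular (lmul L L').
Proof.
  intros [e He] [f Hf]; exists (RMul e f); intro w; simpl; unfold lmul; split.
  - intros (u & v & Hu & Hv & ->); exists u, v; rewrite <- He, <- Hf; auto.
  - intros (u & v & Hu & Hv & ->); exists u, v; rewrite He, Hf; auto.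
Qed.

Definition rzero : RegLang := exist _ lzero regular_zero.
Definition rone : RegLang := exist _ lone regular_one.
Definition radd (L L' : RegLang) : RegLang :=
  exist _ (ladd (proj1_sig L) (proj1_sig L'))
          (regular_add (proj2_sig L) (proj2_sig L')).
Definition rmul (L L' : RegLang) : RegLang :=
  exist _ (lmul (proj1_sig L) (proj1_sig L'))
          (regular_mul (proj2_sig L) (proj2_sig L')).
Definition rsing (a : delta) : RegLang := exist _ (lsing a) (regular_sing a).

(** s is the supremum (= union) in R Delta_2^* of the regular subset
    rsem rmul rone A of the multiplicative monoid of R Delta_2^*. *)
Definition is_union (A : rexp RegLang) (s : RegLang) : Prop :=
  forall w, proj1_sig s w <-> exists L, rsem rmul rone A L /\ proj1_sig L w.

Definition Rcong (R : RegLang -> RegLang -> Prop) : Prop :=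
  (forall x, R x x) /\ (forall x y, R x y -> R y x) /\
  (forall x y z, R x y -> R y z -> R x z) /\
  (forall x x' y y', R x x' -> R y y' -> R (radd x y) (radd x' y')) /\
  (forall x x' y y', R x x' -> R y y' -> R (rmul x y) (rmul x' y')) /\
  (* regular sets with equal downward closures modulo R have R-congruent sups;
     x/R lies in the downward closure of A/R iff [x + a] = [a] for some a in A *)
  (forall (A B : rexp RegLang) (sA sB : RegLang), is_union A sA -> is_union B sB ->
     (forall x, (exists a, rsem rmul rone A a /\ R (radd x a) a) <->
                (exists c, rsem rmul rone B c /\ R (radd x c) c)) ->
     R sA sB).

Definition rho (L L' : RegLang) : Prop :=
  forall R, Rcong R ->
    R (rmul (rsing b) (rsing d)) rone -> R (rmul (rsing p) (rsing q)) rone ->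
    R (rmul (rsing b) (rsing q)) rzero -> R (rmul (rsing p) (rsing d)) rzero ->
    R L L'.

(** R-morphisms C_2' = R Delta_2^*/rho -> T, presented as R-morphisms
    R Delta_2^* -> T that are constant on rho-classes. *)
Definition c2morph {T : rdioid} (g : RegLang -> T) : Prop :=
  (forall L L', rho L L' -> g L = g L') /\
  g rzero = dzero /\ g rone = done /\
  (forall x y, g (radd x y) = dadd (g x) (g y)) /\
  (forall x y, g (rmul x y) = dmul (g x) (g y)) /\
  (forall A s, is_union A s -> g s = dsup (rmap g A)).

Definition tensor_data {K T : rdioid} (iota : K -> T) (g : RegLang -> T) : Prop :=
  rmorph iota /\ c2morph g /\
  (forall x L, dmul (iota x) (g L) = dmul (g L) (iota x)).

Definition is_tensor_C2 {K T : rdioid} (iota : K -> T) (g : RegLang -> T) : Prop :=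
  tensor_data iota g /\
  forall (T' : rdioid) (iota' : K -> T') (g' : RegLang -> T'),
    tensor_data iota' g' ->
    exists h : T -> T', rmorph h /\ (forall x, h (iota x) = iota' x) /\
      (forall L, h (g L) = g' L) /\
      (forall h' : T -> T', rmorph h' -> (forall x, h' (iota x) = iota' x) ->
         (forall L, h' (g L) = g' L) -> forall t, h' t = h t).

(** * Matrices (indexed by nat; only indices < n matter) *)
Fixpoint fsum {T : rdioid} (n : nat) (f : nat -> T) : T :=
  match n with 0 => dzero | S m => dadd (fsum m f) (f m) end.

(** Standard block-recursive matrix star, splitting n+1 = 1 + n:
    M = [A B; C D], F = A + B D* C,
    M* = [F*, F* B D*; D* C F*, D* + D* C F* B D*]. *)
Fixpoint mstar {T : rdioid} (n : nat) (M : nat -> nat -> T) : nat -> nat -> T :=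
  match n with
  | 0 => fun _ _ => dzero
  | S m =>
    let Ds := mstar m (fun i j => M (S i) (S j)) in
    let u := fun j => fsum m (fun k => dmul (M 0 (S k)) (Ds k j)) in
    let v := fun i => fsum m (fun k => dmul (Ds i k) (M (S k) 0)) in
    let Fs := kstar (dadd (M 0 0) (fsum m (fun k => dmul (M 0 (S k)) (v k)))) in
    fun i j => match i, j with
               | 0, 0 => Fs
               | 0, S j' => dmul Fs (u j')
               | S i', 0 => dmul (v i') Fs
               | S i', S j' => dadd (Ds i' j') (dmul (dmul (v i') Fs) (u j'))
               end
  end.

Inductive ent_bp := E0 | Eb | Ep.
Inductive ent_dq := F0 | Fd | Fq.

Definition bool_el {T : rdioid} (x : bool) : T := if x then done else dzero.
Definition bp_el {T : rdioid} (g : RegLang -> T) (x : ent_bp) : T :=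
  match x with E0 => dzero | Eb => g (rsing b) | Ep => g (rsing p) end.
Definition dq_el {T : rdioid} (g : RegLang -> T) (x : ent_dq) : T :=
  match x with F0 => dzero | Fd => g (rsing d) | Fq => g (rsing q) end.

Definition row_mat_col {T : rdioid} (n : nat) (S : nat -> T) (M : nat -> nat -> T)
  (F : nat -> T) : T :=
  fsum n (fun j => dmul (fsum n (fun i => dmul (S i) (M i j))) (F j)).

(* Main.v *)
Require Import Defs.
From Stdlib Require Import List Arith Lia FunctionalExtensionality ProofIrrelevance.
Import ListNotations.
Set Implicit Arguments.

Section Basic.
Context {T : rdioid}.
Implicit Types x y z a b c s : T.
Implicit Types e f : rexp T.

Definition le x y := @dadd T x y = y.

Lemma dadd0r x : dadd x dzero = x.
Proof. rewrite daddC; apply dadd0. Qed.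
Lemma le_refl x : le x x.
Proof. apply daddI. Qed.
Lemma le_trans x y z : le x y -> le y z -> le x z.
Proof. unfold le; intros H1 H2. rewrite <- H2, daddA, H1. reflexivity. Qed.
Lemma le_antisym x y : le x y -> le y x -> x = y.
Proof. unfold le; intros H1 H2. rewrite <- H1. rewrite daddC. now symmetry. Qed.
Lemma le_add_l x y : le x (dadd x y).
Proof. unfold le. rewrite daddA, daddI; auto. Qed.
Lemma le_add_r x y : le y (dadd x y).
Proof. rewrite daddC; apply le_add_l. Qed.
Lemma le_lub x y z : le x z -> le y z -> le (dadd x y) z.
Proof. unfold le; intros H1 H2. rewrite <- daddA, H2, H1. reflexivity. Qed.
Lemma le_add_mono x x' y y' : le x x' -> le y y' -> le (dadd x y) (dadd x' y').
Proof.
  intros; apply le_lub.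
  - eapply le_trans; [exact H| apply le_add_l].
  - eapply le_trans; [exact H0| apply le_add_r].
Qed.
Lemma le_mul_mono x x' y y' : le x x' -> le y y' -> le (dmul x y) (dmul x' y').
Proof.
  intros H1 H2. apply le_trans with (dmul x' y).
  - unfold le in *. rewrite <- dmulDl, H1. reflexivity.
  - unfold le in *. rewrite <- dmulDr, H2. reflexivity.
Qed.
Lemma le_zero x : le dzero x.
Proof. apply dadd0. Qed.
Lemma le_eq x y : x = y -> le x y.
Proof. intros ->; apply le_refl. Qed.

Lemma dadd_swap4 a b c (w : T) : dadd (dadd a b) (dadd c w) = dadd (dadd a c) (dadd b w).
Proof.
  rewrite <- !daddA. f_equal. rewrite !daddA. f_equal. apply daddC.
Qed.

Lemma dsup_ub' e x : rsem dmul done e x -> le x (dsup e).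
Proof. apply dsup_ub. Qed.
Lemma dsup_least' e y : (forall x, rsem dmul done e x -> le x y) -> le (dsup e) y.
Proof. apply dsup_least. Qed.

Lemma dsup_atom x : dsup (RAtom x) = x.
Proof.
  apply le_antisym.
  - apply dsup_least'. intros z Hz; simpl in Hz; subst; apply le_refl.
  - apply dsup_ub'. simpl; reflexivity.
Qed.
Lemma dsup_zero : dsup (@RZero T) = dzero.
Proof.
  apply le_antisym.
  - apply dsup_least'. intros z Hz; destruct Hz.
  - apply le_zero.
Qed.
Lemma dsup_one : dsup (@ROne T) = done.
Proof.
  apply le_antisym.
  - apply dsup_least'. intros z Hz; simpl in Hz; subst; apply le_refl.
  - apply dsup_ub'. simpl; reflexivity.
Qed.
Lemma dsup_plus e f : dsup (RPlus e f) = dadd (dsup e) (dsup f).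
Proof.
  apply le_antisym.
  - apply dsup_least'. intros z [Hz|Hz].
    + eapply le_trans; [apply dsup_ub'; exact Hz| apply le_add_l].
    + eapply le_trans; [apply dsup_ub'; exact Hz| apply le_add_r].
  - apply le_lub; apply dsup_least'; intros z Hz; apply dsup_ub'; simpl; auto.
Qed.

Lemma star_ind s c y : le (dadd c (dmul s y)) y -> le (dmul (kstar s) c) y.
Proof.
  intros H. unfold kstar. rewrite <- (dsup_atom c). rewrite <- dsup_mul.
  apply dsup_least'. intros x (y1 & z & (l & Hl & ->) & Hz & ->).
  simpl in Hz; subst z.
  induction Hl as [|a l Ha Hl IH]; simpl.
  - rewrite dmul1l. eapply le_trans; [apply le_add_l| exact H].
  - simpl in Ha; subst a. rewrite <- dmulA.
    eapply le_trans; [| exact H]. eapply le_trans; [| apply le_add_r].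
    apply le_mul_mono; [apply le_refl| exact IH].
Qed.

Lemma star_ub s l : Forall (fun y => y = s) l -> le (fold_right dmul done l) (kstar s).
Proof. intros Hl. apply dsup_ub'. exists l; split; auto. Qed.

Lemma star_unfold s : kstar s = dadd done (dmul s (kstar s)).
Proof.
  apply le_antisym.
  - unfold kstar at 1. apply dsup_least'. intros x (l & Hl & ->).
    destruct Hl as [|a l Ha Hl]; simpl.
    + apply le_add_l.
    + simpl in Ha; subst a. eapply le_trans; [|apply le_add_r].
      apply le_mul_mono; [apply le_refl|]. apply star_ub; auto.
  - apply le_lub.
    + apply star_ub with (l := nil); constructor.
    + unfold kstar. rewrite <- (dsup_atom s) at 1. rewrite <- dsup_mul.
      apply dsup_least'. intros x (y1 & z & Hy & (l & Hl & ->) & ->).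
      simpl in Hy; subst y1. apply dsup_ub'. exists (s :: l); split; [constructor; [reflexivity|exact Hl]|reflexivity].
Qed.

Lemma le_one_star s : le done (kstar s).
Proof. apply star_ub with (l := nil); constructor. Qed.

Lemma dsup_star e : dsup (RStar e) = kstar (dsup e).
Proof.
  apply le_antisym.
  - apply dsup_least'. intros x (l & Hl & ->).
    induction Hl as [|a l Ha Hl IH]; simpl.
    + apply le_one_star.
    + rewrite (star_unfold (dsup e)). eapply le_trans; [|apply le_add_r].
      apply le_mul_mono; auto. apply dsup_ub'; auto.
  - rewrite <- (dmul1r _ (kstar (dsup e))). apply star_ind. apply le_lub.
    + apply dsup_ub'. exists nil; split; auto.
    + rewrite <- dsup_mul. apply dsup_least'. intros x (y1 & z & Hy & (l & Hl & ->) & ->).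
      apply dsup_ub'. exists (y1 :: l); split; auto.
Qed.

End Basic.

Section Mat.
Context {T : rdioid}.
Implicit Types x y z a b c s : T.
Implicit Types f g : nat -> T.

Lemma fsum_ext n f f' : (forall k, k < n -> f k = f' k) -> fsum n f = fsum n f'.
Proof.
  induction n; intros H; simpl; auto.
  rewrite IHn by (intros; apply H; lia). rewrite H by lia. reflexivity.
Qed.
Lemma fsum_add n f f' : fsum n (fun k => dadd (f k) (f' k)) = dadd (fsum n f) (fsum n f').
Proof.
  induction n; simpl. { rewrite dadd0; auto. }
  rewrite IHn. apply dadd_swap4.
Qed.
Lemma fsum_zero n : fsum n (fun _ => @dzero T) = dzero.
Proof. induction n; simpl; auto. rewrite IHn, dadd0; auto. Qed.
Lemma fsum_mull n a f : fsum n (fun k => dmul a (f k)) = dmul a (fsum n f).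
Proof.
  induction n; simpl. { now rewrite dmul0r. }
  rewrite IHn, dmulDr; auto.
Qed.
Lemma fsum_mulr n f a : fsum n (fun k => dmul (f k) a) = dmul (fsum n f) a.
Proof.
  induction n; simpl. { now rewrite dmul0l. }
  rewrite IHn, dmulDl; auto.
Qed.
Lemma fsum_first n f : fsum (S n) f = dadd (f 0) (fsum n (fun k => f (S k))).
Proof.
  induction n.
  - simpl. rewrite dadd0, dadd0r; auto.
  - change (fsum (S (S n)) f) with (dadd (fsum (S n) f) (f (S n))).
    rewrite IHn. simpl. rewrite daddA; auto.
Qed.
Lemma fsum_split n1 n2 f : fsum (n1 + n2) f = dadd (fsum n1 f) (fsum n2 (fun k => f (n1 + k))).
Proof.
  induction n2.
  - rewrite Nat.add_0_r. simpl. rewrite dadd0r; auto.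
  - rewrite Nat.add_succ_r. simpl. rewrite IHn2, daddA; auto.
Qed.
Lemma fsum_swap n m (h : nat -> nat -> T) :
  fsum n (fun i => fsum m (fun j => h i j)) = fsum m (fun j => fsum n (fun i => h i j)).
Proof.
  induction n; simpl.
  - symmetry; apply fsum_zero.
  - rewrite IHn. rewrite <- fsum_add. reflexivity.
Qed.
Lemma fsum_mono n f f' : (forall k, k < n -> le (f k) (f' k)) -> le (fsum n f) (fsum n f').
Proof.
  induction n; intros H; simpl. apply le_refl.
  apply le_add_mono. apply IHn; intros; apply H; lia. apply H; lia.
Qed.

Definition mv n (A : nat -> nat -> T) (v : nat -> T) : nat -> T :=
  fun i => fsum n (fun k => dmul (A i k) (v k)).
Definition sol n (A : nat -> nat -> T) (F : nat -> T) := mv n (mstar n A) F.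

Lemma mv_add n A v w i : mv n A (fun k => dadd (v k) (w k)) i = dadd (mv n A v i) (mv n A w i).
Proof. unfold mv. rewrite <- fsum_add. apply fsum_ext; intros; apply dmulDr. Qed.
Lemma mv_mulr n A v c i : mv n A (fun k => dmul (v k) c) i = dmul (mv n A v i) c.
Proof. unfold mv. rewrite <- fsum_mulr. apply fsum_ext; intros; apply dmulA. Qed.
Lemma mv_mono n A v w i : (forall k, k < n -> le (v k) (w k)) -> le (mv n A v i) (mv n A w i).
Proof. intros H; unfold mv. apply fsum_mono; intros; apply le_mul_mono; auto using le_refl. Qed.

Lemma mv_assoc n m (a : nat -> T) (B : nat -> nat -> T) v :
  fsum n (fun k => dmul (fsum m (fun l => dmul (a l) (B l k))) (v k)) =
  fsum m (fun l => dmul (a l) (mv n B v l)).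
Proof.
  transitivity (fsum n (fun k => fsum m (fun l => dmul (a l) (dmul (B l k) (v k))))).
  - apply fsum_ext; intros k _. rewrite <- fsum_mulr. apply fsum_ext; intros; apply eq_sym, dmulA.
  - rewrite fsum_swap. apply fsum_ext; intros l _. unfold mv. apply fsum_mull.
Qed.

Lemma sol_spec n : forall M F,
  (forall i, i < n -> sol n M F i = dadd (F i) (mv n M (sol n M F) i)) /\
  (forall y : nat -> T, (forall i, i < n -> le (dadd (F i) (mv n M y i)) (y i)) ->
     forall i, i < n -> le (sol n M F i) (y i)).
Proof.
  induction n as [|m IH]; intros M F.
  { split; intros; lia. }
  set (D := fun i j => M (S i) (S j)).
  set (Ds := mstar m D).
  set (w := fun k => M (S k) 0).
  set (F' := fun k => F (S k)).
  set (s := dadd (M 0 0) (fsum m (fun k => dmul (M 0 (S k)) (mv m Ds w k)))).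
  set (c := dadd (F 0) (fsum m (fun l => dmul (M 0 (S l)) (sol m D F' l)))).
  assert (E0 : sol (S m) M F 0 = dmul (kstar s) c).
  { unfold sol, mv at 1. rewrite fsum_first.
    change (mstar (S m) M 0 0) with (kstar s).
    change (fun k => dmul (mstar (S m) M 0 (S k)) (F (S k))) with
      (fun k => dmul (dmul (kstar s) (fsum m (fun l => dmul (M 0 (S l)) (Ds l k)))) (F' k)).
    unfold c. rewrite dmulDr. f_equal.
    transitivity (dmul (kstar s) (fsum m (fun k => dmul (fsum m (fun l => dmul (M 0 (S l)) (Ds l k))) (F' k)))).
    - rewrite <- fsum_mull. apply fsum_ext; intros k _. apply eq_sym, dmulA.
    - f_equal. unfold sol. apply mv_assoc. }
  assert (ES : forall i, sol (S m) M F (S i) =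
     dadd (sol m D F' i) (dmul (mv m Ds w i) (dmul (kstar s) c))).
  { intros i. unfold sol at 1, mv at 1. rewrite fsum_first.
    change (mstar (S m) M (S i) 0) with (dmul (mv m Ds w i) (kstar s)).
    change (fun k => dmul (mstar (S m) M (S i) (S k)) (F (S k))) with
     (fun k => dmul (dadd (Ds i k) (dmul (dmul (mv m Ds w i) (kstar s))
                (fsum m (fun l => dmul (M 0 (S l)) (Ds l k))))) (F' k)).
    set (vF := dmul (mv m Ds w i) (kstar s)).
    erewrite fsum_ext by (intros k _; apply dmulDl).
    rewrite fsum_add.
    assert (Hu : fsum m (fun k => dmul (dmul vF (fsum m (fun l => dmul (M 0 (S l)) (Ds l k)))) (F' k))
                 = dmul vF (fsum m (fun l => dmul (M 0 (S l)) (sol m D F' l)))).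
    { unfold sol. rewrite <- mv_assoc. rewrite <- fsum_mull. apply fsum_ext; intros; apply eq_sym, dmulA. }
    rewrite Hu. change (fsum m (fun k => dmul (Ds i k) (F' k))) with (sol m D F' i).
    unfold c. rewrite dmulA. fold vF. rewrite dmulDr.
    rewrite daddA, (daddC _ (dmul vF (F 0))), <- daddA. reflexivity. }
  set (Z := dmul (kstar s) c) in *.
  destruct (IH D F') as [IA IB].
  destruct (IH D w) as [IAw _].
  split.
  - intros i Hi. destruct i as [|i].
    + rewrite E0. unfold mv at 1. rewrite fsum_first. rewrite E0.
      erewrite fsum_ext by (intros k _; rewrite ES, dmulDr, dmulA; reflexivity).
      rewrite fsum_add, fsum_mulr.
      unfold Z at 1. rewrite (star_unfold s) at 1. rewrite dmulDl, dmul1l, <- dmulA. fold Z.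
      unfold c at 1, s at 1. rewrite dmulDl.
      set (X := fsum m (fun l => dmul (M 0 (S l)) (sol m D F' l))).
      set (Y := fsum m (fun k => dmul (M 0 (S k)) (mv m Ds w k))).
      rewrite <- !daddA. f_equal. rewrite !daddA. f_equal. apply daddC.
    + rewrite ES. unfold mv at 2. rewrite fsum_first. rewrite E0.
      erewrite fsum_ext by (intros k _; rewrite ES, dmulDr, dmulA; reflexivity).
      rewrite fsum_add, fsum_mulr.
      change (mv m Ds w) with (sol m D w).
      rewrite IA by lia. rewrite (IAw i) by lia.
      change (F (S i)) with (F' i). change (M (S i) 0) with (w i).
      change (fsum m (fun k => dmul (M (S i) (S k)) (sol m D F' k))) with (mv m D (sol m D F') i).
      change (fsum m (fun k => dmul (M (S i) (S k)) (sol m D w k))) with (mv m D (sol m D w) i).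
      rewrite dmulDl.
      set (A1 := F' i). set (A2 := mv m D (sol m D F') i). set (A3 := dmul (w i) Z).
      set (A4 := dmul (mv m D (sol m D w) i) Z).
      rewrite dadd_swap4. rewrite <- !daddA. reflexivity.
  - intros y Hy.
    set (y' := fun k => y (S k)).
    set (G := fun k => dadd (F' k) (dmul (w k) (y 0))).
    assert (HG : forall i, i < m -> le (sol m D G i) (y' i)).
    { apply (proj2 (IH D G)). intros i Hi. specialize (Hy (S i) ltac:(lia)).
      unfold mv in Hy. rewrite fsum_first in Hy. unfold G, y'. rewrite <- daddA. exact Hy. }
    assert (HG' : forall i, i < m -> le (dadd (sol m D F' i) (dmul (mv m Ds w i) (y 0))) (y' i)).
    { intros i Hi. unfold sol, G in HG. specialize (HG i Hi). rewrite mv_add, mv_mulr in HG. exact HG. }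
    assert (H0 : le Z (y 0)).
    { apply star_ind. eapply le_trans; [| apply (Hy 0 ltac:(lia))].
      unfold c, s. rewrite dmulDl. change (mv (S m) M y 0) with (fsum (S m) (fun k => dmul (M 0 k) (y k))). rewrite fsum_first.
      rewrite <- fsum_mulr.
      eapply le_trans with (dadd (dadd (F 0) (dmul (M 0 0) (y 0)))
          (fsum m (fun k => dmul (M 0 (S k)) (dadd (sol m D F' k) (dmul (mv m Ds w k) (y 0)))))).
      - apply le_eq. rewrite dadd_swap4. f_equal. rewrite <- fsum_add.
        apply fsum_ext; intros k _. rewrite dmulDr, dmulA. reflexivity.
      - rewrite <- daddA. apply le_add_mono; [apply le_refl|]. apply le_add_mono; [apply le_refl|].
        apply fsum_mono. intros k Hk. apply le_mul_mono; [apply le_refl|]. apply HG'; auto. }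
    intros i Hi. destruct i as [|i].
    + rewrite E0. exact H0.
    + rewrite ES. eapply le_trans; [| apply (HG' i ltac:(lia))].
      apply le_add_mono; [apply le_refl|]. apply le_mul_mono; [apply le_refl| exact H0].
Qed.
End Mat.

Definition gblk {A : Type} (z : A) (n1 : nat) (A1 C B : nat -> nat -> A) (i j : nat) : A :=
  if i <? n1 then (if j <? n1 then A1 i j else C i (j - n1))
  else (if j <? n1 then z else B (i - n1) (j - n1)).
Definition cat {A : Type} (n1 : nat) (v1 v2 : nat -> A) (i : nat) : A :=
  if i <? n1 then v1 i else v2 (i - n1).

Lemma cat_l {A : Type} n1 (v1 v2 : nat -> A) i : i < n1 -> cat n1 v1 v2 i = v1 i.
Proof. intros H; unfold cat. apply Nat.ltb_lt in H; rewrite H; auto. Qed.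
Lemma cat_r {A : Type} n1 (v1 v2 : nat -> A) i : cat n1 v1 v2 (n1 + i) = v2 i.
Proof.
  unfold cat. destruct (Nat.ltb_spec (n1 + i) n1); [lia|]. f_equal; lia.
Qed.

Section Block.
Context {T : rdioid}.

Lemma mv_ext n (A : nat -> nat -> T) v v' i : (forall k, k < n -> v k = v' k) -> mv n A v i = mv n A v' i.
Proof. intros H; unfold mv; apply fsum_ext; intros; rewrite H; auto. Qed.

Lemma mv_blk_top n1 n2 (A C B : nat -> nat -> T) z i : i < n1 ->
  mv (n1 + n2) (gblk dzero n1 A C B) z i = dadd (mv n1 A z i) (mv n2 C (fun k => z (n1 + k)) i).
Proof.
  intros Hi. unfold mv. rewrite fsum_split. f_equal.
  - apply fsum_ext; intros k Hk. unfold gblk.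
    apply Nat.ltb_lt in Hi, Hk. rewrite Hi, Hk. auto.
  - apply fsum_ext; intros k Hk. unfold gblk.
    apply Nat.ltb_lt in Hi. rewrite Hi.
    destruct (Nat.ltb_spec (n1 + k) n1); [lia|]. do 2 f_equal; lia.
Qed.

Lemma mv_blk_bot n1 n2 (A C B : nat -> nat -> T) z i :
  mv (n1 + n2) (gblk dzero n1 A C B) z (n1 + i) = mv n2 B (fun k => z (n1 + k)) i.
Proof.
  unfold mv. rewrite fsum_split.
  rewrite (fsum_ext _ (fun _ => dzero)).
  - rewrite fsum_zero, dadd0. apply fsum_ext; intros k Hk. unfold gblk.
    destruct (Nat.ltb_spec (n1 + i) n1); [lia|].
    destruct (Nat.ltb_spec (n1 + k) n1); [lia|]. do 2 f_equal; lia.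
  - intros k Hk. unfold gblk.
    destruct (Nat.ltb_spec (n1 + i) n1); [lia|].
    apply Nat.ltb_lt in Hk. rewrite Hk. apply dmul0l.
Qed.

Lemma block_sol n1 n2 (A C B : nat -> nat -> T) (F1 F2 : nat -> T) :
  (forall i, i < n1 -> sol (n1 + n2) (gblk dzero n1 A C B) (cat n1 F1 F2) i =
       sol n1 A (fun i => dadd (F1 i) (mv n2 C (sol n2 B F2) i)) i) /\
  (forall i, i < n2 -> sol (n1 + n2) (gblk dzero n1 A C B) (cat n1 F1 F2) (n1 + i) =
       sol n2 B F2 i).
Proof.
  set (x := sol (n1 + n2) (gblk dzero n1 A C B) (cat n1 F1 F2)).
  set (x2 := sol n2 B F2).
  set (x1 := sol n1 A (fun i => dadd (F1 i) (mv n2 C x2 i))).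
  set (z := cat n1 x1 x2).
  destruct (sol_spec (n1 + n2) (gblk dzero n1 A C B) (cat n1 F1 F2)) as [XA XB].
  destruct (sol_spec n2 B F2) as [X2A X2B].
  destruct (sol_spec n1 A (fun i => dadd (F1 i) (mv n2 C x2 i))) as [X1A X1B].
  fold x in XA, XB. fold x2 in X2A, X2B. fold x1 in X1A, X1B.
  assert (Hz : forall i, i < n1 + n2 -> le (x i) (z i)).
  { apply XB. intros i Hi. apply le_eq.
    destruct (Nat.ltb_spec i n1) as [Hi1|Hi1].
    - rewrite mv_blk_top by auto. unfold z. rewrite !cat_l by auto.
      rewrite X1A by auto.
      rewrite (mv_ext _ (cat n1 x1 x2) x1) by (intros; apply cat_l; auto).
      rewrite (mv_ext _ (fun k => cat n1 x1 x2 (n1 + k)) x2) by (intros; apply cat_r).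
      rewrite <- daddA. f_equal. apply daddC.
    - replace i with (n1 + (i - n1)) by lia.
      rewrite mv_blk_bot. unfold z. rewrite !cat_r.
      rewrite (mv_ext _ (fun k => cat n1 x1 x2 (n1 + k)) x2) by (intros; apply cat_r).
      rewrite X2A by lia. reflexivity. }
  assert (Hx2 : forall i, i < n2 -> le (x2 i) (x (n1 + i))).
  { apply X2B. intros i Hi. apply le_eq. rewrite XA by lia.
    rewrite mv_blk_bot, cat_r. reflexivity. }
  assert (Hx1 : forall i, i < n1 -> le (x1 i) (x i)).
  { apply X1B. intros i Hi. rewrite (XA i) by lia.
    rewrite mv_blk_top by auto. rewrite cat_l by auto.
    rewrite <- daddA. apply le_add_mono; [apply le_refl|].
    rewrite daddC. apply le_add_mono; [apply le_refl|].
    apply mv_mono. intros; apply Hx2; auto. }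
  split.
  - intros i Hi. apply le_antisym.
    + eapply le_trans; [apply Hz; lia|]. unfold z. rewrite cat_l by auto. apply le_refl.
    + apply Hx1; auto.
  - intros i Hi. apply le_antisym.
    + eapply le_trans; [apply Hz; lia|]. unfold z. rewrite cat_r. apply le_refl.
    + apply Hx2; auto.
Qed.

End Block.

Section Plus.
Context {T : rdioid}.

Lemma sol_mulr n (M : nat -> nat -> T) v c i : sol n M (fun k => dmul (v k) c) i = dmul (sol n M v i) c.
Proof. unfold sol. apply mv_mulr. Qed.

Lemma plus_sol n (M : nat -> nat -> T) (Sv Fv : nat -> T) :
  fsum n (fun i => dmul (Sv i) (sol n (fun i j => dadd (M i j) (dmul (Fv i) (Sv j))) Fv i)) =
  dmul (fsum n (fun i => dmul (Sv i) (sol n M Fv i)))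
       (kstar (fsum n (fun i => dmul (Sv i) (sol n M Fv i)))).
Proof.
  set (M' := fun i j => dadd (M i j) (dmul (Fv i) (Sv j))).
  set (v := sol n M Fv). set (w := sol n M' Fv).
  set (phi := fsum n (fun i => dmul (Sv i) (v i))).
  destruct (sol_spec n M Fv) as [VA VB]. destruct (sol_spec n M' Fv) as [WA WB].
  fold v in VA, VB. fold w in WA, WB.
  assert (HM' : forall y i, mv n M' y i = dadd (mv n M y i) (dmul (Fv i) (fsum n (fun k => dmul (Sv k) (y k))))).
  { intros y i. unfold mv, M'. rewrite <- fsum_mull, <- fsum_add. apply fsum_ext; intros k _.
    rewrite dmulDl, dmulA. reflexivity. }
  assert (H1 : forall i, i < n -> le (w i) (dmul (v i) (kstar phi))).
  { apply WB. intros i Hi. apply le_eq. rewrite HM'.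
    rewrite (VA i Hi). rewrite dmulDl.
    rewrite (mv_mulr n M v (kstar phi) i).
    assert (E : fsum n (fun k => dmul (Sv k) (dmul (v k) (kstar phi))) = dmul phi (kstar phi)).
    { unfold phi. rewrite <- fsum_mulr. apply fsum_ext; intros; apply dmulA. }
    rewrite E.
    assert (EF : dmul (Fv i) (kstar phi) = dadd (Fv i) (dmul (Fv i) (dmul phi (kstar phi))))
      by (rewrite (star_unfold phi) at 1; rewrite dmulDr, dmul1r; reflexivity).
    rewrite EF. rewrite <- !daddA. f_equal. apply daddC. }
  set (c := fsum n (fun k => dmul (Sv k) (w k))).
  assert (H2 : forall i, i < n -> le (dmul (v i) (dadd done c)) (w i)).
  { intros i Hi. change (dmul (v i) (dadd done c)) with (dmul (sol n M Fv i) (dadd done c)).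
    rewrite <- sol_mulr. apply (proj2 (sol_spec n M _)); auto.
    intros j Hj. apply le_eq. rewrite (WA j Hj). rewrite HM'. fold c.
    rewrite dmulDr, dmul1r. rewrite <- !daddA. f_equal. apply daddC. }
  assert (H3 : le (dmul phi (dadd done c)) c).
  { unfold phi. rewrite <- fsum_mulr. apply fsum_mono. intros k Hk.
    rewrite <- dmulA. apply le_mul_mono; [apply le_refl|]. apply H2; auto. }
  assert (H4 : le (kstar phi) (dadd done c)).
  { rewrite <- (dmul1r _ (kstar phi)). apply star_ind. apply le_add_mono; [apply le_refl| exact H3]. }
  assert (H5 : forall i, i < n -> w i = dmul (v i) (kstar phi)).
  { intros i Hi. apply le_antisym; auto.
    eapply le_trans; [| apply H2; auto]. apply le_mul_mono; [apply le_refl| exact H4]. }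
  unfold phi. rewrite <- fsum_mulr. apply fsum_ext. intros i Hi.
  fold w. rewrite H5 by auto. apply dmulA.
Qed.

Lemma zero_sol n (M : nat -> nat -> T) F : (forall i j, M i j = dzero) ->
  forall i, i < n -> sol n M F i = F i.
Proof.
  intros HM i Hi. destruct (sol_spec n M F) as [A _]. rewrite A by auto.
  unfold mv. rewrite (fsum_ext _ (fun _ => dzero)). rewrite fsum_zero, dadd0r; auto.
  intros; rewrite HM; apply dmul0l.
Qed.

End Plus.
Local Open Scope bool_scope.

Fixpoint rall {A : Type} (P : A -> Prop) (e : rexp A) : Prop :=
  match e with
  | RZero | ROne => True
  | RAtom a => P a
  | RPlus e f | RMul e f => rall P e /\ rall P f
  | RStar e => rall P e
  end.

Section Rep.
Context {K T : rdioid} (iota : K -> T) (g : RegLang -> T) (Hio : rmorph iota).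

Definition Mof (U : nat -> nat -> ent_bp) (X : nat -> nat -> K) (V : nat -> nat -> ent_dq) :
  nat -> nat -> T :=
  fun i j => dadd (dadd (bp_el g (U i j)) (iota (X i j))) (dq_el g (V i j)).

Definition rep (phi : T) : Prop :=
  exists (n : nat) (S F : nat -> bool) (U : nat -> nat -> ent_bp)
         (V : nat -> nat -> ent_dq) (X : nat -> nat -> K),
    phi = row_mat_col n (fun i => bool_el (S i))
            (mstar n (fun i j => dadd (dadd (bp_el g (U i j)) (iota (X i j)))
                                      (dq_el g (V i j))))
            (fun j => bool_el (F j)).

Lemma rmc n (Sv : nat -> T) M Fv :
  row_mat_col n Sv (mstar n M) Fv = fsum n (fun i => dmul (Sv i) (sol n M Fv i)).
Proof. unfold row_mat_col, sol. apply mv_assoc. Qed.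

Lemma rep_intro n S F U V X phi :
  phi = fsum n (fun i => dmul (bool_el (S i)) (sol n (Mof U X V) (fun j => bool_el (F j)) i)) ->
  rep phi.
Proof. intros ->. exists n, S, F, U, V, X. rewrite rmc. reflexivity. Qed.

Lemma rep_elim phi : rep phi -> exists n S F U V X,
  phi = fsum n (fun i => dmul (bool_el (S i)) (sol n (Mof U X V) (fun j => bool_el (F j)) i)).
Proof. intros (n & S & F & U & V & X & ->). exists n, S, F, U, V, X. rewrite rmc. reflexivity. Qed.

Lemma iota0 : iota dzero = dzero.
Proof. apply Hio. Qed.
Lemma iota1 : iota done = done.
Proof. apply Hio. Qed.
Lemma iotaD x y : iota (dadd x y) = dadd (iota x) (iota y).
Proof. apply Hio. Qed.

Lemma rep_zero : rep dzero.
Proof.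
  exists 0, (fun _ => false), (fun _ => false), (fun _ _ => E0), (fun _ _ => F0), (fun _ _ => dzero).
  reflexivity.
Qed.

Lemma rep_one : rep done.
Proof.
  apply (rep_intro 1 (fun _ => true) (fun _ => true) (fun _ _ => E0) (fun _ _ => F0) (fun _ _ => dzero)).
  simpl. rewrite zero_sol by (auto || (intros; unfold Mof; simpl; rewrite iota0, dadd0, dadd0r; auto)).
  simpl. rewrite dadd0, dmul1l. reflexivity.
Qed.

Lemma rep_gen u k v : rep (dadd (dadd (bp_el g u) (iota k)) (dq_el g v)).
Proof.
  set (y := dadd (dadd (bp_el g u) (iota k)) (dq_el g v)).
  apply (rep_intro 2 (fun i => i =? 0) (fun i => i =? 1)
     (fun i j => if (i =? 0) && (j =? 1) then u else E0)
     (fun i j => if (i =? 0) && (j =? 1) then v else F0)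
     (fun i j => if (i =? 0) && (j =? 1) then k else dzero)).
  replace (Mof _ _ _) with (fun i j : nat => if (i =? 0) && (j =? 1) then y else dzero).
  2:{ apply functional_extensionality; intro i; apply functional_extensionality; intro j.
      unfold Mof. destruct ((i =? 0) && (j =? 1)); auto. simpl. rewrite iota0, dadd0, dadd0r. auto. }
  set (M := fun i j : nat => if (i =? 0) && (j =? 1) then y else dzero).
  destruct (sol_spec 2 M (fun j => bool_el (j =? 1))) as [A _].
  set (x := sol 2 M (fun j => bool_el (j =? 1))) in *.
  assert (H1 : x 1 = done).
  { rewrite A by lia. unfold mv. cbn [fsum Nat.eqb andb bool_el]. unfold M.
    cbn [Nat.eqb andb]. rewrite ?dmul0l, ?dadd0, ?dadd0r. reflexivity. }
  assert (H0 : x 0 = y).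
  { rewrite A by lia. unfold mv. cbn [fsum Nat.eqb andb bool_el]. unfold M.
    cbn [Nat.eqb andb]. rewrite H1, ?dmul0l, ?dmul1r, ?dadd0, ?dadd0r. reflexivity. }
  cbn [fsum Nat.eqb bool_el]. rewrite H0, dmul1l, dmul0l, dadd0, dadd0r. reflexivity.
Qed.


Lemma Mof_blk n1 U1 X1 V1 U2 X2 V2 Xc :
  Mof (gblk E0 n1 U1 (fun _ _ => E0) U2) (gblk dzero n1 X1 Xc X2) (gblk F0 n1 V1 (fun _ _ => F0) V2)
  = gblk dzero n1 (Mof U1 X1 V1) (fun i j => iota (Xc i j)) (Mof U2 X2 V2).
Proof.
  apply functional_extensionality; intro i; apply functional_extensionality; intro j.
  unfold Mof, gblk. destruct (i <? n1), (j <? n1); simpl; auto.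
  - rewrite dadd0, dadd0r. auto.
  - rewrite iota0, dadd0, dadd0r. auto.
Qed.

Lemma bool_cat n1 (F1 F2 : nat -> bool) :
  (fun j => @bool_el T (cat n1 F1 F2 j)) = cat n1 (fun j => bool_el (F1 j)) (fun j => bool_el (F2 j)).
Proof. apply functional_extensionality; intro j. unfold cat. destruct (j <? n1); auto. Qed.

Lemma rep_add a b' : rep a -> rep b' -> rep (dadd a b').
Proof.
  intros Ha Hb. apply rep_elim in Ha as (n1 & S1 & F1 & U1 & V1 & X1 & ->).
  apply rep_elim in Hb as (n2 & S2 & F2 & U2 & V2 & X2 & ->).
  apply (rep_intro (n1 + n2) (cat n1 S1 S2) (cat n1 F1 F2)
    (gblk E0 n1 U1 (fun _ _ => E0) U2) (gblk F0 n1 V1 (fun _ _ => F0) V2)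
    (gblk dzero n1 X1 (fun _ _ => dzero) X2)).
  rewrite Mof_blk, bool_cat, fsum_split.
  destruct (block_sol n1 n2 (Mof U1 X1 V1) (fun i j => iota dzero) (Mof U2 X2 V2)
     (fun j => bool_el (F1 j)) (fun j => bool_el (F2 j))) as [B1 B2].
  f_equal.
  - apply fsum_ext; intros i Hi. rewrite B1 by auto. unfold cat at 1.
    apply Nat.ltb_lt in Hi as Hlt. rewrite Hlt. f_equal.
    f_equal. apply functional_extensionality; intro j.
    unfold mv. rewrite (fsum_ext _ (fun _ => dzero)). rewrite fsum_zero, dadd0r; auto.
    intros; rewrite iota0; apply dmul0l.
  - apply fsum_ext; intros i Hi. rewrite B2 by auto. unfold cat at 1.
    destruct (Nat.ltb_spec (n1 + i) n1); [lia|]. do 3 f_equal; lia.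
Qed.

Lemma rep_mul a b' : rep a -> rep b' -> rep (dmul a b').
Proof.
  intros Ha Hb. apply rep_elim in Ha as (n1 & S1 & F1 & U1 & V1 & X1 & ->).
  apply rep_elim in Hb as (n2 & S2 & F2 & U2 & V2 & X2 & ->).
  set (Xc := fun i j => if F1 i && S2 j then @done K else dzero).
  apply (rep_intro (n1 + n2) (cat n1 S1 (fun _ => false)) (cat n1 (fun _ => false) F2)
    (gblk E0 n1 U1 (fun _ _ => E0) U2) (gblk F0 n1 V1 (fun _ _ => F0) V2)
    (gblk dzero n1 X1 Xc X2)).
  rewrite Mof_blk, bool_cat, fsum_split.
  destruct (block_sol n1 n2 (Mof U1 X1 V1) (fun i j => iota (Xc i j)) (Mof U2 X2 V2)
     (fun j => bool_el false) (fun j => bool_el (F2 j))) as [B1 B2].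
  set (x2 := sol n2 (Mof U2 X2 V2) (fun j => bool_el (F2 j))) in *.
  set (phi2 := fsum n2 (fun i => dmul (bool_el (S2 i)) (x2 i))).
  assert (HV : (fun i => dadd (bool_el false) (mv n2 (fun i j => iota (Xc i j)) x2 i))
              = (fun i => dmul (bool_el (F1 i)) phi2)).
  { apply functional_extensionality; intro i. simpl. rewrite dadd0. unfold mv, phi2.
    rewrite <- fsum_mull. apply fsum_ext; intros k _. rewrite dmulA. f_equal.
    unfold Xc. destruct (F1 i), (S2 k); simpl; rewrite ?iota1, ?iota0, ?dmul1l, ?dmul0l, ?dmul0r; auto. }
  rewrite HV in B1. symmetry.
  rewrite (fsum_ext _ (fun i => dmul (dmul (bool_el (S1 i)) (sol n1 (Mof U1 X1 V1) (fun j => bool_el (F1 j)) i)) phi2)).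
  rewrite fsum_mulr.
  rewrite (@fsum_ext _ n2 _ (fun _ => dzero)). rewrite fsum_zero, dadd0r. reflexivity.
  - intros i Hi. unfold cat. destruct (Nat.ltb_spec (n1 + i) n1); [lia|]. apply dmul0l.
  - intros i Hi. rewrite B1 by auto. unfold cat. apply Nat.ltb_lt in Hi as Hlt. rewrite Hlt.
    rewrite sol_mulr. apply dmulA.
Qed.

Lemma rep_pstar a : rep a -> rep (dmul a (kstar a)).
Proof.
  intros Ha. apply rep_elim in Ha as (n & S & F & U & V & X & ->).
  apply (rep_intro n S F U V (fun i j => dadd (X i j) (if F i && S j then done else dzero))).
  replace (Mof U (fun i j => dadd (X i j) (if F i && S j then done else dzero)) V) with (fun i j => dadd (Mof U X V i j) (dmul (bool_el (F i)) (bool_el (S j)))).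
  - apply eq_sym, plus_sol.
  - apply functional_extensionality; intro i; apply functional_extensionality; intro j.
    unfold Mof. rewrite iotaD.
    assert (E : iota (if F i && S j then done else dzero) = dmul (bool_el (F i)) (bool_el (S j))).
    { destruct (F i), (S j); simpl; rewrite ?iota1, ?iota0, ?dmul1l, ?dmul0l, ?dmul0r; auto. }
    rewrite E. rewrite <- !daddA. do 2 f_equal. apply daddC.
Qed.

Lemma rep_star a : rep a -> rep (kstar a).
Proof. intros Ha. rewrite star_unfold. apply rep_add. apply rep_one. apply rep_pstar; auto. Qed.

Lemma rep_dsup e : rall rep e -> rep (dsup e).
Proof.
  induction e; simpl; intros H.
  - rewrite dsup_zero. apply rep_zero.
  - rewrite dsup_one. apply rep_one.
  - rewrite dsup_atom. auto.
  - rewrite dsup_plus. apply rep_add; tauto.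
  - rewrite dsup_mul. apply rep_mul; tauto.
  - rewrite dsup_star. apply rep_star; auto.
Qed.

Lemma rep_iota k : rep (iota k).
Proof.
  pose proof (rep_gen E0 k F0) as H. simpl in H. rewrite dadd0, dadd0r in H. exact H.
Qed.

Lemma rep_letter a : rep (g (rsing a)).
Proof.
  destruct a.
  - pose proof (rep_gen Eb dzero F0) as H. simpl in H. rewrite iota0, dadd0r, dadd0r in H. exact H.
  - pose proof (rep_gen Ep dzero F0) as H. simpl in H. rewrite iota0, dadd0r, dadd0r in H. exact H.
  - pose proof (rep_gen E0 dzero Fd) as H. simpl in H. rewrite iota0, dadd0, dadd0 in H. exact H.
  - pose proof (rep_gen E0 dzero Fq) as H. simpl in H. rewrite iota0, dadd0, dadd0 in H. exact H.
Qed.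

End Rep.

Lemma rmap_comp {A B C : Type} (f : A -> B) (h : B -> C) e :
  rmap h (rmap f e) = rmap (fun x => h (f x)) e.
Proof. induction e; simpl; congruence. Qed.
Lemma rmap_id {A : Type} (e : rexp A) : rmap (fun x => x) e = e.
Proof. induction e; simpl; congruence. Qed.

Lemma rall_rmap {A B : Type} (Q : B -> Prop) (f : A -> B) e :
  (forall a, Q (f a)) -> rall Q (rmap f e).
Proof. intros H; induction e; simpl; auto. Qed.

Section RsemMap.
Context {A B : Type} (m1 : A -> A -> A) (o1 : A) (m2 : B -> B -> B) (o2 : B) (f : A -> B).
Hypothesis Hm : forall x y, f (m1 x y) = m2 (f x) (f y).
Hypothesis Ho : f o1 = o2.

Lemma rsem_rmap_fwd e x : rsem m1 o1 e x -> rsem m2 o2 (rmap f e) (f x).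
Proof.
  revert x; induction e; simpl; intros x H.
  - destruct H.
  - subst; auto.
  - subst; auto.
  - destruct H; [left|right]; auto.
  - destruct H as (y & z & Hy & Hz & ->). exists (f y), (f z). rewrite Hm; auto.
  - destruct H as (s & Hs & ->). exists (map f s). split.
    + induction Hs; simpl; constructor; auto.
    + clear Hs. induction s; simpl; auto. rewrite Hm, IHs. auto.
Qed.

Lemma rsem_rmap_bwd e z : rsem m2 o2 (rmap f e) z -> exists x, rsem m1 o1 e x /\ f x = z.
Proof.
  revert z; induction e; simpl; intros z H.
  - destruct H.
  - subst. exists o1; auto.
  - subst. exists a; auto.
  - destruct H as [H|H]; [destruct (IHe1 _ H) as (x & ? & ?)|destruct (IHe2 _ H) as (x & ? & ?)];
      exists x; auto.
  - destruct H as (y & w & Hy & Hw & ->).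
    destruct (IHe1 _ Hy) as (x1 & H1 & <-). destruct (IHe2 _ Hw) as (x2 & H2 & <-).
    exists (m1 x1 x2). split; auto. exists x1, x2; auto.
  - destruct H as (s & Hs & ->). induction Hs as [|a s Ha Hs IH]; simpl.
    + exists o1. split; auto. exists nil; simpl; auto.
    + destruct (IHe _ Ha) as (xa & Hxa & <-).
      destruct IH as (xs & (l & Hl & ->) & <-).
      exists (m1 xa (fold_right m1 o1 l)). split.
      * exists (xa :: l). split; auto.
      * apply Hm.
Qed.
End RsemMap.

Definition lw (w : list delta) : RegLang.
Proof. refine (exist _ (fun u => u = w) _). exists (RAtom w). intro u; simpl; tauto. Defined.

Lemma key_fwd e u : rsem (@app delta) nil e u ->
  exists L', rsem rmul rone (rmap lw e) L' /\ proj1_sig L' u.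
Proof.
  revert u; induction e; simpl; intros u H.
  - destruct H.
  - subst. exists rone. simpl. split; auto. reflexivity.
  - subst. exists (lw a). simpl. auto.
  - destruct H as [H|H]; [destruct (IHe1 _ H) as (L & ? & ?)|destruct (IHe2 _ H) as (L & ? & ?)];
      exists L; auto.
  - destruct H as (y & z & Hy & Hz & ->).
    destruct (IHe1 _ Hy) as (L1 & H1 & H1'). destruct (IHe2 _ Hz) as (L2 & H2 & H2').
    exists (rmul L1 L2). split.
    + exists L1, L2; auto.
    + simpl. unfold lmul. exists y, z; auto.
  - destruct H as (s & Hs & ->). induction Hs as [|a s Ha Hs IH]; simpl.
    + exists rone. split. exists nil; simpl; auto. simpl. reflexivity.
    + destruct (IHe _ Ha) as (La & HLa & HLa').
      destruct IH as (Ls & (l & Hl & ->) & HLs).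
      exists (rmul La (fold_right rmul rone l)). split.
      * exists (La :: l). split; auto.
      * simpl. unfold lmul. exists a, (fold_right (@app delta) nil s). auto.
Qed.

Lemma key_bwd e L' : rsem rmul rone (rmap lw e) L' ->
  exists u0, rsem (@app delta) nil e u0 /\ forall u, proj1_sig L' u -> u = u0.
Proof.
  revert L'; induction e; simpl; intros L' H.
  - destruct H.
  - subst. exists nil. split; auto.
  - subst. exists a. simpl. split; auto.
  - destruct H as [H|H]; [destruct (IHe1 _ H) as (x & ? & ?)|destruct (IHe2 _ H) as (x & ? & ?)];
      exists x; auto.
  - destruct H as (y & z & Hy & Hz & ->).
    destruct (IHe1 _ Hy) as (u1 & H1 & H1'). destruct (IHe2 _ Hz) as (u2 & H2 & H2').
    exists (u1 ++ u2). split.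
    + exists u1, u2; auto.
    + intros u (v1 & v2 & Hv1 & Hv2 & ->). rewrite (H1' _ Hv1), (H2' _ Hv2). auto.
  - destruct H as (s & Hs & ->). induction Hs as [|a s Ha Hs IH]; simpl.
    + exists nil. split. exists nil; simpl; auto. simpl. auto.
    + destruct (IHe _ Ha) as (ua & Hua & Hua').
      destruct IH as (us & (l & Hl & ->) & Hus).
      exists (ua ++ fold_right (@app delta) nil l). split.
      * exists (ua :: l). split; auto.
      * intros u (v1 & v2 & Hv1 & Hv2 & ->). rewrite (Hua' _ Hv1), (Hus _ Hv2). auto.
Qed.

Lemma union_rmap_lw (L : RegLang) e :
  (forall w, proj1_sig L w <-> rsem (@app delta) nil e w) -> is_union (rmap lw e) L.
Proof.
  intros He w. rewrite He. split.
  - apply key_fwd.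
  - intros (L' & H1 & H2). destruct (@key_bwd e L' H1) as (u0 & Hu0 & Hu). rewrite (Hu _ H2). auto.
Qed.

Section Final.
Context {K T : rdioid} (iota : K -> T) (g : RegLang -> T) (Hio : rmorph iota) (Hg : c2morph g).

Lemma g_union A s : is_union A s -> g s = dsup (rmap g A).
Proof. destruct Hg as (_ & _ & _ & _ & _ & H). apply H. Qed.

Lemma rep_gw w : rep iota g (g (lw w)).
Proof.
  induction w as [|a w IH].
  - rewrite (@g_union ROne). simpl. rewrite dsup_one. apply rep_one; auto.
    intro u; simpl. split.
    + intros ->. exists rone. split; reflexivity.
    + intros (L & -> & H). exact H.
  - rewrite (@g_union (RMul (RAtom (rsing a)) (RAtom (lw w)))).
    + apply rep_dsup; auto. simpl. split; auto. apply rep_letter; auto.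
    + intro u; simpl. split.
      * intros ->. exists (rmul (rsing a) (lw w)). split.
        -- exists (rsing a), (lw w). auto.
        -- simpl. unfold lmul, lsing. exists [a], w. auto.
      * intros (L & (y & z & -> & -> & ->) & H). simpl in H. unfold lmul, lsing in H.
        destruct H as (u1 & u2 & -> & -> & ->). reflexivity.
Qed.

Lemma rep_g L : rep iota g (g L).
Proof.
  destruct (proj2_sig L) as [e He].
  rewrite (@g_union _ _ (union_rmap_lw L e He)). rewrite rmap_comp.
  apply rep_dsup; auto. apply rall_rmap. intros; apply rep_gw.
Qed.

Definition Ts := { t : T | rep iota g t }.

Lemma sig_eq (x y : Ts) : proj1_sig x = proj1_sig y -> x = y.
Proof.
  destruct x as [x Hx], y as [y Hy]; simpl; intros ->. f_equal. apply proof_irrelevance.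
Qed.

Definition sadd (x y : Ts) : Ts.
Proof. refine (exist _ (dadd (proj1_sig x) (proj1_sig y)) _). apply rep_add; auto; apply proj2_sig. Defined.
Definition smul (x y : Ts) : Ts.
Proof. refine (exist _ (dmul (proj1_sig x) (proj1_sig y)) _). apply rep_mul; auto; apply proj2_sig. Defined.
Definition szero : Ts := exist _ dzero (rep_zero iota g).
Definition sone : Ts.
Proof. refine (exist _ done _). apply rep_one; auto. Defined.
Definition ssup (e : rexp Ts) : Ts.
Proof.
  refine (exist _ (dsup (rmap (@proj1_sig _ _) e)) _).
  apply rep_dsup; auto. apply rall_rmap. apply proj2_sig.
Defined.

Lemma pm x y : proj1_sig (smul x y) = dmul (proj1_sig x) (proj1_sig y).
Proof. reflexivity. Qed.
Lemma po : proj1_sig sone = done.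
Proof. reflexivity. Qed.

Definition Tsub : rdioid.
Proof.
  refine (@RDioid Ts sadd smul szero sone ssup _ _ _ _ _ _ _ _ _ _ _ _ _ _);
  intros; apply sig_eq; simpl.
  - apply daddA.
  - apply daddC.
  - apply dadd0.
  - apply daddI.
  - apply dmulA.
  - apply dmul1l.
  - apply dmul1r.
  - apply dmulDl.
  - apply dmulDr.
  - apply dmul0l.
  - apply dmul0r.
  - apply dsup_ub. apply (rsem_rmap_fwd smul sone dmul (@proj1_sig _ _) pm po). assumption.
  - apply dsup_least. intros z Hz.
    destruct (rsem_rmap_bwd smul sone dmul (@proj1_sig _ _) pm po _ _ Hz) as (x & Hx & <-).
    specialize (H x Hx). apply (f_equal (@proj1_sig _ _)) in H. exact H.
  - apply dsup_mul.
Defined.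

End Final.

Unset Implicit Arguments.
Local Close Scope bool_scope.

Theorem theorem5 (K T : rdioid) (iota : K -> T) (g : RegLang -> T) :
  is_tensor_C2 iota g ->
  forall phi : T,
  exists (n : nat) (S F : nat -> bool) (U : nat -> nat -> ent_bp)
         (V : nat -> nat -> ent_dq) (X : nat -> nat -> K),
    phi = row_mat_col n (fun i => bool_el (S i))
            (mstar n (fun i j => dadd (dadd (bp_el g (U i j)) (iota (X i j)))
                                      (dq_el g (V i j))))
            (fun j => bool_el (F j)).
Proof.
  intros [[Hio [Hg Hcomm]] Huniv] phi.
  assert (Hri : forall k, rep iota g (iota k)) by (intros; apply rep_iota; auto).
  assert (Hrg : forall L, rep iota g (g L)) by (intros; apply rep_g; auto).
  set (TS := @Tsub K T iota g Hio).
  set (iota' := fun k => (exist _ (iota k) (Hri k) : TS)).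
  set (g' := fun L => (exist _ (g L) (Hrg L) : TS)).
  assert (TD : tensor_data iota' g').
  { split; [|split].
    - destruct Hio as (H0 & H1 & H2 & H3 & H4).
      repeat split; intros; apply sig_eq; simpl; auto.
      rewrite rmap_comp. simpl. apply H4.
    - destruct Hg as (H0 & H1 & H2 & H3 & H4 & H5).
      repeat split; intros; apply sig_eq; simpl; auto.
      rewrite rmap_comp. simpl. apply H5; auto.
    - intros; apply sig_eq; simpl; apply Hcomm. }
  destruct (Huniv TS iota' g' TD) as (h & Hh & Hhi & Hhg & _).
  destruct (Huniv T iota g (conj Hio (conj Hg Hcomm))) as (h0 & _ & _ & _ & Hu0).
  assert (E1 : forall t, (fun t => t) t = h0 t).
  { apply Hu0; auto. repeat split; auto. intros e. rewrite rmap_id. reflexivity. }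
  assert (E2 : forall t, proj1_sig (h t) = h0 t).
  { apply Hu0.
    - destruct Hh as (H0 & H1 & H2 & H3 & H4).
      repeat split.
      + rewrite H0. reflexivity.
      + rewrite H1. reflexivity.
      + intros x y. rewrite H2. reflexivity.
      + intros x y. rewrite H3. reflexivity.
      + intros e. rewrite H4. simpl. rewrite rmap_comp. reflexivity.
    - intros x. rewrite Hhi. reflexivity.
    - intros L. rewrite Hhg. reflexivity. }
  assert (HR : rep iota g phi).
  { rewrite (E1 phi), <- (E2 phi). apply proj2_sig. }
  exact HR.
Qed.
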